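(* Let $\langle X\mid R\rangle$ be a side-confluent $N$-homogeneous presentation with $X$ a finite totally ordered set, and let $n\geq0$. Let $h'_n:\bigoplus_{m\geq l_N(n)}V^{\otimes m}\to T(V)$ be the linear map whose restriction to $V^{\otimes m}$ is the left bound $\varphi^{P_{n,m}}(\gamma_1)$ of $P_{n,m}$. Then the image of $h'_n$ is included in $\mathrm{im}(\phi)\otimes J_{n+1}$.
   Context: $\mathbb{K}$ is a field, $N\geq2$, $X^{(m)}$ words of length $m$, $V=\mathbb{K}X$, $V^{\otimes m}=\mathbb{K}X^{(m)}$, $T(V)$ the free algebra (tensor products of subspaces of $T(V)$ are viewed in $T(V)$ via concatenation). $R\subset V^{\otimes N}$, $\overline R=\mathrm{span}(R)$, $I(R)_j=0$ ($j<N$), $I(R)_j=\sum_{i=0}^{j-N}V^{\otimes i}\otimes\overline R\otimes V^{\otimes j-N-i}$ ($j\geq N$). $X^{(m)}$ lexicographically ordered, $\mathrm{lm}(f)$ greatest word in $f\neq0$. Conventions: leading coefficients in $R$ are $1$; a word is a normal form if it has no factor $\mathrm{lm}(f)$, $f\in R$, an element is a normal form if it is a combination of such words; the presentation is reduced. $S(\mathrm{lm}(f))=\mathrm{lm}(f)-f$ ($f\in R$), $S(w)=w$ otherwise; $\langle t,s\rangle^k=\cdots sts$ ($k$ factors, rightmost $s$); side-confluent: for each $1\leq m\leq N-1$ some $k$ gives $\langle\mathrm{id}_{V^{\otimes m}}\otimes S,S\otimes\mathrm{id}_{V^{\otimes m}}\rangle^k=\langle S\otimes\mathrm{id}_{V^{\otimes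 m}},\mathrm{id}_{V^{\otimes m}}\otimes S\rangle^k$. Then every $f$ has a unique normal form $\widehat f$ reachable by reductions; $\phi:T(V)\to T(V)$, $f\mapsto\widehat f$. $l_N(2k)=kN$, $l_N(2k+1)=kN+1$; $J_1=V$, $J_2=\overline R$, $J_n=\bigcap_{i=0}^{l_N(n)-N}V^{\otimes i}\otimes\overline R\otimes V^{\otimes l_N(n)-N-i}$ ($n\geq3$). A reduction operator relatively to $X^{(m)}$ is a linear projector $T$ of $V^{\otimes m}$ with each $T(w)$ equal to $w$ or a combination of words $<w$; the unique one with kernel $W$ is $\theta_{X^{(m)}}^{-1}(W)$. For $m\geq l_N(n)$: $F_1^{n,m}=\theta_{X^{(m)}}^{-1}(I(R)_{m-l_N(n)}\otimes V^{\otimes l_N(n)})$, $F_2^{n,m}=\mathrm{id}$ if $m<l_N(n+1)$, else $\theta_{X^{(m)}}^{-1}(V^{\otimes m-l_N(n+1)}\otimes J_{n+1})$; $P_{n,m}=(F_1^{n,m},F_2^{n,m})$, which is confluent under the hypotheses; fix $k$ with $\langle F_1^{n,m},F_2^{n,m}\rangle^k=\langle F_2^{n,m},F_1^{n,m}\rangle^k$. $\mathcal{A}_k$ is the algebra on $s_1,s_2$ with relations $s_i^2=s_i$, $\langle s_1,s_2\rangle^k=\langle s_2,s_1\rangle^k$; $\gamma_1=(1-s_2)\sum_{i\in I}\langle s_2,s_1\rangle^i$ with $I$ the odd integers in $[1,k-1]$; $\varphi^{P_{n,m}}:\mathcal{A}_k\to\mathrm{End}(V^{\otimes m})$, $s_i\mapsto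 F_i^{n,m}$. *)

(* Defs.v *)
From HB Require Import structures.
From mathcomp Require Import all_boot all_order all_algebra.
Set Implicit Arguments. Unset Strict Implicit. Unset Printing Implicit Defensive.
Import Order.TTheory GRing.Theory.
Local Open Scope ring_scope.

Section Presentation.
Variables (K : fieldType) (disp : Order.disp_t) (X : finOrderType disp).

(* V^{(x) m} = K X^{(m)}: functions on words of length m (finite support). *)
Definition tn (m : nat) := {ffun m.-tuple X -> K^o}.

(* Coefficient of an element of V^{(x) m} on an arbitrary word (0 if the
   length is not m). *)
Definition coef m (f : tn m) (s : seq X) : K :=
  if (insub s : option (m.-tuple X)) is Some t then f t else 0.

(* the basis word s seen in V^{(x) m} (0 if size s <> m) *)
Definition ew m (s : seq X) : tn m := [ffun t : m.-tuple X => (val t == s)%:R].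

(* concatenation product f (x) g of f in V^{(x) a}, g in V^{(x) b}, placed
   in degree j (it is 0 unless j = a + b). *)
Definition tens j a b (f : tn a) (g : tn b) : tn j :=
  [ffun w : j.-tuple X => coef f (take a w) * coef g (drop a w)].

Definition retype j a (f : tn a) : tn j := [ffun w : j.-tuple X => coef f w].

Fixpoint lexlt (s t : seq X) : bool :=
  match s, t with
  | x :: s', y :: t' => (x < y)%O || ((x == y) && lexlt s' t')
  | _, _ => false
  end.

Definition is_lmb m (f : tn m) (w : m.-tuple X) : bool :=
  (f w != 0) && [forall u, (f u != 0) ==> (u == w) || lexlt u w].

Definition lm m (f : tn m) : option (m.-tuple X) := [pick w | is_lmb f w].

Variables (N : nat) (R : seq (tn N)).

Definition lc_one : Prop := forall f, f \in R -> exists w, is_lmb f w /\ f w = 1.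

Definition normal_word (w : seq X) : Prop :=
  forall f p u v, f \in R -> lm f = Some p -> w <> u ++ val p ++ v.

Definition normal_form m (g : tn m) : Prop :=
  forall w : m.-tuple X, g w != 0 -> normal_word w.

Definition reduced : Prop :=
  (forall f g, f \in R -> g \in R -> lm f = lm g -> f = g) /\
  (forall f, f \in R -> forall w : N.-tuple X, f w != 0 -> lm f <> Some w ->
     normal_word w).

Definition Sw (w : N.-tuple X) : tn N :=
  let i := find (fun f => lm f == Some w) R in
  if (i < size R)%N then ew N w - nth 0 R i else ew N w.

Definition Sop (x : tn N) : tn N := \sum_(w : N.-tuple X) x w *: Sw w.

(* id_{V^{(x) m}} (x) T and T (x) id_{V^{(x) m}}, as operators on V^{(x) j}
   (used with j = N + m) *)
Definition idT j m (T : tn N -> tn N) (x : tn j) : tn j :=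
  \sum_(w : j.-tuple X) x w *: tens j (ew m (take m w)) (T (ew N (drop m w))).

Definition Tid j m (T : tn N -> tn N) (x : tn j) : tn j :=
  \sum_(w : j.-tuple X) x w *: tens j (T (ew N (take N w))) (ew m (drop N w)).

(* <t, s>^k = ... s t s  (k factors, rightmost s) *)
Fixpoint alt j (k : nat) (t s : tn j -> tn j) : tn j -> tn j :=
  match k with
  | 0 => id
  | k'.+1 => alt k' s t \o s
  end.

Definition side_confluent : Prop :=
  forall m, (1 <= m <= N.-1)%N ->
    exists k, forall x : tn (N + m),
      alt k (idT m Sop) (Tid m Sop) x =
      alt k (Tid m Sop) (idT m Sop) x.

(* one reduction step in V^{(x) m}: replace the word u lm(g) v by u S(lm g) v *)
Definition red_step m (f f' : tn m) : Prop :=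
  exists g p u v,
    [/\ g \in R, lm g = Some p, coef f (u ++ val p ++ v) != 0 &
        f' = f - coef f (u ++ val p ++ v) *:
                 tens m (tens (size u + N) (ew (size u) u) g) (ew (size v) v)].

Inductive reach m : tn m -> tn m -> Prop :=
  | reach_refl f : reach f f
  | reach_step f f' f'' : red_step f f' -> reach f' f'' -> reach f f''.

(* degree-m part of im(phi): normal forms reachable from some element *)
Definition imphi m (g : tn m) : Prop := exists f, reach f g /\ normal_form g.

Definition tensv j a b (A : {vspace tn a}) (B : {vspace tn b}) : {vspace tn j} :=
  << [seq tens j x y | x <- vbasis A, y <- vbasis B] >>%VS.

Definition Rbar : {vspace tn N} := << R >>%VS.

Definition IR j : {vspace tn j} :=
  if (j < N)%N then 0%VS else
  (\sum_(i < (j - N).+1)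
      tensv j (tensv (i + N) (fullv : {vspace tn i}) Rbar)
              (fullv : {vspace tn (j - N - i)}))%VS.

Definition lN (n : nat) : nat := if odd n then (n./2 * N + 1)%N else (n./2 * N)%N.

Definition J (n : nat) : {vspace tn (lN n)} :=
  if n == 1%N then fullv
  else if n == 2%N then << [seq retype (lN n) r | r <- R] >>%VS
  else (\bigcap_(i < (lN n - N).+1)
          tensv (lN n) (tensv (i + N) (fullv : {vspace tn i}) Rbar)
                       (fullv : {vspace tn (lN n - N - i)}))%VS.

Definition lin m (T : tn m -> tn m) : Prop :=
  forall (a : K) (x y : tn m), T (a *: x + y) = a *: T x + T y.

Definition redop m (T : tn m -> tn m) : Prop :=
  [/\ lin T, forall x, T (T x) = T x &
      forall w : m.-tuple X, T (ew m w) = ew m w \/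
        forall u : m.-tuple X, T (ew m w) u != 0 -> lexlt u w].

Definition theta_inv m (W : {vspace tn m}) (T : tn m -> tn m) : Prop :=
  redop T /\ forall x, T x = 0 <-> x \in W.

(* varphi^{P}(gamma_1) = (1 - F2) sum_{i odd, 1 <= i <= k-1} <F2, F1>^i *)
Definition left_bound m (k : nat) (F1 F2 : tn m -> tn m) (x : tn m) : tn m :=
  let y := \sum_(i < k | odd i) alt i F2 F1 x in y - F2 y.

Definition in_imphi_J (n m : nat) (z : tn m) : Prop :=
  exists s : seq (tn (m - lN n.+1) * tn (lN n.+1)),
    (forall p, p \in s -> imphi p.1 /\ p.2 \in J n.+1) /\
    z = \sum_(p <- s) tens m p.1 p.2.

End Presentation.

(* Main.v *)
Require Import Defs.
From HB Require Import structures.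
From mathcomp Require Import all_boot all_order all_algebra.
From mathcomp Require Import zify.
Set Implicit Arguments. Unset Strict Implicit. Unset Printing Implicit Defensive.
Import Order.TTheory GRing.Theory.
Local Open Scope ring_scope.

Section Aux.
Variables (K : fieldType) (disp : Order.disp_t) (X : finOrderType disp).
Local Notation tn := (tn K X).

Lemma coefT m (f : tn m) (t : m.-tuple X) : coef f t = f t.
Proof. by rewrite /coef; case: insubP => [u _ /val_inj -> // |]; rewrite size_tuple eqxx. Qed.

Lemma coef_size m (f : tn m) s : coef f s != 0 -> size s = m.
Proof. by rewrite /coef; case: insubP => [t /eqP -> //|]; rewrite eqxx. Qed.

Lemma coefE m (f : tn m) s : coef f s = if size s == m then coef f s else 0.
Proof. by case: (coef f s =P 0) => [->|/eqP/coef_size ->]; rewrite ?eqxx ?if_same. Qed.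

Lemma coef_ew m (s0 s : seq X) : size s0 = m -> coef (ew K m s0) s = (s == s0)%:R.
Proof.
move=> hs; rewrite /coef; case: insubP => [t _ <- | ]; first by rewrite ffunE.
move=> /negP H; case: eqP => // E; case: H; by rewrite E hs.
Qed.

Lemma coefD m (a : K) (f g : tn m) s : coef (a *: f + g) s = a * coef f s + coef g s.
Proof. by rewrite /coef; case: insubP => [t _ _|_]; rewrite ?ffunE ?mulr0 ?addr0. Qed.

Lemma coef0 m s : coef (0 : tn m) s = 0.
Proof. by rewrite /coef; case: insubP => [t _ _|_]; rewrite ?ffunE. Qed.

Lemma coef_sum m I (r : seq I) (P : pred I) (F : I -> tn m) s :
  coef (\sum_(i <- r | P i) F i) s = \sum_(i <- r | P i) coef (F i) s.
Proof.
elim/big_rec2: _ => [|i y x _ <-]; first by rewrite coef0.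
by rewrite -[F i]scale1r coefD mul1r scale1r.
Qed.

Lemma tens_coef j a b (f : tn a) (g : tn b) s :
  coef (tens j f g) s = if size s == j then coef f (take a s) * coef g (drop a s) else 0.
Proof.
rewrite /coef; case: insubP => [t _ <-|]; first by rewrite ffunE size_tuple eqxx.
by move/negbTE=> ->.
Qed.

Lemma decomp m (x : tn m) : x = \sum_(w : m.-tuple X) x w *: ew K m w.
Proof.
apply/ffunP => t; rewrite sum_ffunE (bigD1 t) //= !ffunE eqxx big1 ?addr0; first by rewrite /GRing.scale /= mulr1.
by move=> w wt; rewrite !ffunE; case: eqP => [/val_inj E|]; [rewrite E eqxx in wt|]; rewrite /GRing.scale /= ?mulr0.
Qed.

Lemma ewT m (w : m.-tuple X) u : ew K m w u = (u == w)%:R.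
Proof. by rewrite ffunE. Qed.

Definition lin2 a b (f : tn a -> tn b) := forall (c : K) x y, f (c *: x + y) = c *: f x + f y.

Lemma lin2_0 a b (f : tn a -> tn b) : lin2 f -> f 0 = 0.
Proof.
move=> hf; have := hf 1 0 0; rewrite !scale1r addr0 => E.
by apply/(addrI (f 0)); rewrite addr0 -E.
Qed.

Lemma lin2_sum a b (f : tn a -> tn b) I (r : seq I) (P : pred I) (c : I -> K) v :
  lin2 f -> f (\sum_(i <- r | P i) c i *: v i) = \sum_(i <- r | P i) c i *: f (v i).
Proof.
move=> hf; elim/big_rec2: _ => [|i y x _ <-]; first exact: lin2_0.
by rewrite hf.
Qed.

Lemma lin2N a b (f : tn a -> tn b) x : lin2 f -> f (- x) = - f x.
Proof. by move=> hf; rewrite -[- x]addr0 -scaleN1r hf lin2_0 // addr0 scaleN1r. Qed.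

Lemma lin2B a b (f : tn a -> tn b) x y : lin2 f -> f (x - y) = f x - f y.
Proof. by move=> hf; rewrite addrC -[- y]scaleN1r hf scaleN1r addrC -(lin2N _ hf). Qed.


Lemma lexlt_irr (s : seq X) : lexlt s s = false.
Proof. by elim: s => //= x s ->; rewrite ltxx eqxx. Qed.

Lemma lexlt_trans (s t u : seq X) : lexlt s t -> lexlt t u -> lexlt s u.
Proof.
elim: s t u => [|x s IH] [|y t] [|z u] //=.
case/orP=> [xy|/andP[/eqP <- st]]; case/orP=> [yz|/andP[/eqP <- tu]].
- by rewrite (lt_trans xy yz).
- by rewrite xy.
- by rewrite yz.
- by rewrite eqxx (IH _ _ st tu) orbT.
Qed.

Lemma lexlt_catl (u s t : seq X) : lexlt (u ++ s) (u ++ t) = lexlt s t.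
Proof. by elim: u => //= x u ->; rewrite ltxx eqxx. Qed.

Lemma lexlt_catr (s t a b : seq X) : lexlt s t -> lexlt (s ++ a) (t ++ b).
Proof.
elim: s t => [|x s IH] [|y t] //=.
by case/orP=> [->//|/andP[-> /IH ->]]; rewrite orbT.
Qed.

Lemma sum_ne0 (I : finType) (V : zmodType) (F : I -> V) : \sum_i F i != 0 -> exists i, F i != 0.
Proof.
move=> H; case: (pickP (fun i => F i != 0)) => [i Hi|H0]; first by exists i.
by case/eqP: H; apply: big1 => i _; apply/eqP; apply: negbFE (H0 i).
Qed.

Definition rk m (w : m.-tuple X) := #|[pred u : m.-tuple X | lexlt u w]|.

Lemma rk_lt m (u w : m.-tuple X) : lexlt u w -> (rk u < rk w)%N.
Proof.
move=> uw; apply: proper_card; apply/properP; split.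
  by apply/subsetP => v; rewrite !inE => /lexlt_trans; apply.
by exists u; rewrite !inE ?lexlt_irr.
Qed.

Definition fixedw m (T : tn m -> tn m) (u : m.-tuple X) := T (ew K m u) = ew K m u.

Lemma redop_lin m (T : tn m -> tn m) : redop T -> lin2 T.
Proof. by case. Qed.

Lemma redop_supp m (T : tn m -> tn m) : redop T ->
  forall w u : m.-tuple X, T (ew K m w) u != 0 -> fixedw T u.
Proof.
move=> hT; have hl := redop_lin hT; case: hT => _ hid hr.
suff H : forall n (w : m.-tuple X), (rk w < n)%N -> forall u, T (ew K m w) u != 0 -> fixedw T u.
  by move=> w; apply: (H (rk w).+1).
elim=> // n IH w hw u.
case: (hr w) => [E|Hlt].
  rewrite E ffunE; case: (val u =P val w) => [H _|_]; last by rewrite eqxx.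
  by have -> : u = w by apply: val_inj.
rewrite -hid [X in T X](decomp (T (ew K m w))) lin2_sum // sum_ffunE.
move=> /sum_ne0 [v]; rewrite ffunE => /eqP Hv.
have Tv : T (ew K m w) v != 0.
  by apply/eqP => E; apply: Hv; rewrite E /GRing.scale /= mul0r.
have Tvu : T (ew K m v) u != 0.
  by apply/eqP => E; apply: Hv; rewrite E /GRing.scale /= mulr0.
apply: (IH v) Tvu; rewrite -ltnS; apply: leq_trans hw; rewrite ltnS.
exact: rk_lt (Hlt _ Tv).
Qed.

Lemma fixed_id m (T : tn m -> tn m) (x : tn m) : redop T ->
  (forall u, x u != 0 -> fixedw T u) -> T x = x.
Proof.
move=> hT hx; rewrite {1}(decomp x) lin2_sum; last exact: redop_lin.
rewrite [RHS]decomp; apply: eq_bigr => u _.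
by case: (eqVneq (x u) 0) => [->|/hx ->]; rewrite ?scale0r.
Qed.


Lemma tens_linl j a b (y : tn b) : lin2 (fun x : tn a => tens j x y).
Proof. by move=> c x1 x2; apply/ffunP => w; rewrite !ffunE coefD mulrDl /GRing.scale /= mulrA. Qed.

Lemma tens_linr j a b (x : tn a) : lin2 (fun y : tn b => tens j x y).
Proof.
move=> c y1 y2; apply/ffunP => w; rewrite !ffunE coefD mulrDr.
by rewrite /GRing.scale /= mulrCA.
Qed.

Lemma tens_mem j a b (U : {vspace tn a}) (V : {vspace tn b}) x y :
  x \in U -> y \in V -> tens j x y \in tensv j U V.
Proof.
move=> xU yV; rewrite (coord_vbasis yV) (lin2_sum _ _ _ _ (tens_linr j x)).
apply: memv_suml => i _; apply: memvZ.
rewrite (coord_vbasis xU) (lin2_sum _ _ _ _ (tens_linl j _)).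
apply: memv_suml => i' _; apply: memvZ; apply: memv_span.
by apply/allpairsP; exists ((vbasis U)`_i', (vbasis V)`_i); split => //; apply: mem_nth; rewrite size_tuple.
Qed.

Definition slice B m (z : tn m) (a : seq X) : tn B := [ffun c : B.-tuple X => coef z (a ++ c)].

Lemma slice_lin B m a : lin2 (fun z : tn m => slice B z a).
Proof. by move=> c x y; apply/ffunP => w; rewrite !ffunE coefD. Qed.

Lemma slice_tens A B m (x : tn A) (y : tn B) a : (A + B = m)%N -> size a = A ->
  slice B (tens m x y) a = coef x a *: y.
Proof.
move=> hm ha; apply/ffunP => c; rewrite !ffunE tens_coef size_cat size_tuple ha hm eqxx.
by rewrite (take_size_cat _ ha) (drop_size_cat _ ha) coefT.
Qed.

Lemma slice_mem A B m (U : {vspace tn A}) (V : {vspace tn B}) (z : tn m) a :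
  (A + B = m)%N -> size a = A -> z \in tensv m U V -> slice B z a \in V.
Proof.
move=> hm ha hz.
pose s : seq (tn m) := [seq tens m x y | x <- vbasis U, y <- vbasis V].
have hz' : z \in <<in_tuple s>>%VS by [].
rewrite (coord_span hz') (lin2_sum _ _ _ _ (slice_lin B (m:=m) a)).
apply: memv_suml => i _; apply: memvZ.
have : s`_i \in s by apply: mem_nth; rewrite -[X in (_ < X)%N](size_tuple (in_tuple s)).
case/allpairsP => [[x y] [_ /= yV ->]].
by rewrite slice_tens // memvZ // vbasis_mem.
Qed.

Lemma slice_decomp A B m (z : tn m) : (A + B = m)%N ->
  z = \sum_(a : A.-tuple X) tens m (ew K A a) (slice B z a).
Proof.
move=> hm; apply/ffunP => w; rewrite sum_ffunE.
have hs : size (take A w) == A by rewrite size_takel // size_tuple -hm leq_addr.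
rewrite (bigD1 (Tuple hs)) //= big1 ?addr0.
  rewrite ffunE (coef_ew _ (eqP hs)).
  have -> : (take A w == take A w) = true by apply/eqP.
  rewrite mul1r.
  have hd : size (drop A w) == B by rewrite size_drop size_tuple -hm addKn.
  rewrite (_ : drop A w = val (Tuple hd)) // coefT ffunE /= cat_take_drop coefT.
  by [].
move=> a ha; rewrite ffunE coef_ew ?size_tuple //; case: eqP => [E|]; last by rewrite mul0r.
by case/eqP: ha; apply: val_inj; rewrite /= E.
Qed.

Lemma slice_memP A B m (V : {vspace tn B}) (z : tn m) : (A + B = m)%N ->
  (forall a : A.-tuple X, slice B z a \in V) -> z \in tensv m (fullv : {vspace tn A}) V.
Proof.
move=> hm H; rewrite (@slice_decomp A B m z hm); apply: memv_suml => a _.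
by apply: tens_mem => //; apply: memvf.
Qed.

Definition restrict A m (z : tn m) (P : pred (seq X)) : tn m :=
  [ffun w : m.-tuple X => if P (take A w) then z w else 0].

Lemma coef_restrict A m (z : tn m) P s :
  coef (restrict A z P) s = if P (take A s) then coef z s else 0.
Proof. by rewrite /coef; case: insubP => [t _ <-|_]; rewrite ?ffunE //; case: (P _). Qed.

Lemma restrict_mem A B m (V : {vspace tn B}) (z : tn m) P : (A + B = m)%N ->
  z \in tensv m (fullv : {vspace tn A}) V -> restrict A z P \in tensv m (fullv : {vspace tn A}) V.
Proof.
move=> hm hz; apply: slice_memP => // a.
have -> : slice B (restrict A z P) a = if P a then slice B z a else 0.
  apply/ffunP => c; rewrite !ffunE coef_restrict take_size_cat ?size_tuple //.
  by case: (P a); rewrite ?ffunE.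
case: (P a); last exact: mem0v.
exact: (slice_mem hm (size_tuple a) hz).
Qed.


Lemma prefix_pres A B m (V : {vspace tn B}) (T : tn m -> tn m) : (A + B = m)%N ->
  theta_inv (tensv m (fullv : {vspace tn A}) V) T ->
  forall w u : m.-tuple X, T (ew K m w) u != 0 -> take A u = take A w.
Proof.
move=> hm [hT hker] w u Hu.
have hl := redop_lin hT; have hid : forall x, T (T x) = T x by case: hT.
set g := T (ew K m w) in Hu *.
have gfix : forall v, g v != 0 -> fixedw T v := @redop_supp m T hT w.
have zk : ew K m w - g \in tensv m (fullv : {vspace tn A}) V.
  by apply/hker; rewrite lin2B // /g hid subrr.
pose P := fun a : seq X => a != take A w.
have rmem := restrict_mem P hm zk.
have req : restrict A (ew K m w - g) P = - restrict A g P.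
  apply/ffunP => v; rewrite !ffunE; case: ifP => [hP|_]; last by rewrite oppr0.
  case: (val v =P val w) => [E|_]; last by rewrite sub0r.
  by move: hP; rewrite /P E eqxx.
have fixr : T (restrict A g P) = restrict A g P.
  apply: fixed_id => // v; rewrite ffunE; case: ifP => _; last by rewrite eqxx.
  exact: gfix.
have : T (restrict A g P) = 0.
  have := (hker (restrict A (ew K m w - g) P)).2 rmem.
  by rewrite req (lin2N _ hl) => /eqP; rewrite oppr_eq0 => /eqP.
rewrite fixr => /ffunP /(_ u); rewrite !ffunE; case: ifP => [_ E|].
  by rewrite E eqxx in Hu.
by rewrite /P => /negbFE /eqP.
Qed.


Lemma lead_contra m (T : tn m -> tn m) (e : tn m) (w : m.-tuple X) : redop T ->
  fixedw T w -> e w != 0 -> (forall w', e w' != 0 -> w' = w \/ lexlt w' w) -> T e != 0.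
Proof.
move=> hT hw hew hsupp; have hl := redop_lin hT; case: hT => _ _ hr.
apply/eqP => /ffunP /(_ w); rewrite {1}(decomp e) lin2_sum // sum_ffunE (bigD1 w) //=.
rewrite big1 ?addr0.
  rewrite ffunE hw ffunE eqxx /GRing.scale /= mulr1 ffunE => E.
  by rewrite E eqxx in hew.
move=> w' hw'; rewrite ffunE; case: (eqVneq (e w') 0) => [->|/hsupp [E|Hlt]].
- by rewrite scale0r.
- by rewrite E eqxx in hw'.
case: (hr w') => [->|Hs]; first by rewrite ffunE; case: (val w =P val w') => [/val_inj E|_];
  [rewrite E eqxx in hw' | rewrite /GRing.scale /= mulr0].
case: (eqVneq (T (ew K m w') w) 0) => [->|/Hs Hlt2]; first by rewrite /GRing.scale /= mulr0.
by have := lexlt_trans Hlt Hlt2; rewrite lexlt_irr.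
Qed.

Lemma tens_ne0 j a b (x : tn a) (y : tn b) s : coef (tens j x y) s != 0 ->
  coef x (take a s) != 0 /\ coef y (drop a s) != 0.
Proof.
rewrite tens_coef; case: ifP => _; last by rewrite eqxx.
by rewrite mulf_eq0 negb_or => /andP[].
Qed.

Lemma ew_ne0 n (s0 s : seq X) : size s0 = n -> coef (ew K n s0) s != 0 -> s = s0.
Proof. by move=> hs; rewrite coef_ew //; case: (s =P s0) => // _; rewrite /= mulr0n eqxx. Qed.


Lemma lmb_uniq N (f : tn N) p q : is_lmb f p -> is_lmb f q -> p = q.
Proof.
move=> /andP[hp /forallP Hp] /andP[hq /forallP Hq].
have := implyP (Hp q) hq; have := implyP (Hq p) hp.
case/orP => [/eqP -> //|l1]; case/orP => [/eqP -> //|l2].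
by have := lexlt_trans l1 l2; rewrite lexlt_irr.
Qed.

Lemma lm_lmb N (f : tn N) p : lm f = Some p -> is_lmb f p.
Proof. by rewrite /lm; case: pickP => // q hq [<-]. Qed.

Lemma fixed_normal N (R : seq (tn N)) m l (T : tn m -> tn m) : lc_one R ->
  theta_inv (tensv m (IR R (m - l)) (fullv : {vspace tn l})) T -> (l <= m)%N ->
  forall w : m.-tuple X, fixedw T w -> normal_word R (take (m - l) w).
Proof.
move=> hlc [hT hker] hlm0 w hw f p u v hf hlm heq.
have hpl := lm_lmb hlm.
have fp1 : f p = 1.
  by case: (hlc f hf) => q [hq fq]; rewrite -(lmb_uniq hq hpl).
have hsz : size (take (m - l) w) = (m - l)%N by rewrite size_takel // size_tuple leq_subr.
have hsj : (size u + N + size v)%N = (m - l)%N by rewrite -hsz heq !size_cat size_tuple addnA.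
pose i := size u.
pose b := drop (m - l) w.
have hb : size b = l by rewrite size_drop size_tuple subKn.
have hv : size v = (m - l - N - i)%N by rewrite -hsj /i; lia.
pose e : tn m := tens m (tens (m - l) (tens (i + N) (ew K i u) f) (ew K (m - l - N - i) v)) (ew K l b).
have hNj : ~~ (m - l < N)%N by rewrite -hsj; lia.
have hi : (i < (m - l - N).+1)%N by rewrite -hsj /i; lia.
have emem : e \in tensv m (IR R (m - l)) (fullv : {vspace tn l}).
  apply: tens_mem; last exact: memvf.
  rewrite /IR (negbTE hNj).
  apply: (subvP (sumv_sup (Ordinal hi) (erefl true) (subvv _))).
  apply: tens_mem; last exact: memvf.
  apply: tens_mem; first exact: memvf.
  by apply: memv_span.
have Te : T e = 0 by apply/hker.
have hw_eq : val w = u ++ val p ++ v ++ b.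
  by rewrite -[val w](cat_take_drop (m - l)) heq -!catA.
have : T e != 0.
  apply: (lead_contra hT hw).
    have hs1 : size (u ++ val p ++ v) = (m - l)%N by rewrite !size_cat size_tuple; lia.
    have hs2 : size (u ++ val p) = (i + N)%N by rewrite size_cat size_tuple.
    rewrite -coefT hw_eq /e catA catA -(catA u) tens_coef size_cat hs1 hb subnK // eqxx.
    rewrite (take_size_cat _ hs1) (drop_size_cat _ hs1) coef_ew // eqxx mulr1.
    rewrite tens_coef hs1 eqxx catA (take_size_cat _ hs2) (drop_size_cat _ hs2) coef_ew // eqxx mulr1.
    rewrite tens_coef hs2 eqxx (take_size_cat _ (erefl (size u))) (drop_size_cat _ (erefl (size u))) coef_ew // eqxx mul1r.
    by rewrite coefT fp1 oner_eq0.
  move=> w'; rewrite -coefT /e => /tens_ne0 [/tens_ne0 [/tens_ne0 [H1 Hf] H2] H3].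
  have Hu := ew_ne0 (erefl _) H1.
  have Hv := ew_ne0 hv H2.
  have Hb := ew_ne0 hb H3.
  set D := drop i _ in Hf.
  have hD : size D == N by rewrite (coef_size Hf).
  have hw' : val w' = u ++ D ++ v ++ b.
    rewrite -Hb -Hv -Hu /D !catA cat_take_drop.
    by rewrite !cat_take_drop.
  have fD : f (Tuple hD) != 0 by rewrite -coefT.
  case/andP: hpl => _ /forallP /(_ (Tuple hD)); rewrite fD /= => /orP[/eqP E|Hlt].
    by left; apply: val_inj; rewrite hw' hw_eq -E.
  by right; rewrite hw' hw_eq lexlt_catl; apply: lexlt_catr.
by rewrite Te eqxx.
Qed.


Lemma redop_supp_gen m (T : tn m -> tn m) (z : tn m) u : redop T -> T z u != 0 -> fixedw T u.
Proof.
move=> hT; rewrite (decomp z) lin2_sum; last exact: redop_lin.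
rewrite sum_ffunE => /sum_ne0 [w]; rewrite ffunE => H.
apply: (@redop_supp m T hT w u); apply/eqP => E; move: H; rewrite E.
by rewrite /GRing.scale /= mulr0 eqxx.
Qed.

Lemma normal_take N (R : seq (tn N)) s k : normal_word R s -> normal_word R (take k s).
Proof.
move=> hs f p u v hf hlm E; apply: (hs f p u (v ++ drop k s) hf hlm).
by rewrite -{1}(cat_take_drop k s) E -!catA.
Qed.

Lemma altS j k (t s : tn j -> tn j) x : alt k.+1 t s x = (if odd k then t else s) (alt k t s x).
Proof.
elim: k t s x => [//|k IH] t s x.
change (alt k.+1 s t (s x) = (if odd k.+1 then t else s) (alt k s t (s x))).
by rewrite IH /=; case: (odd k).
Qed.

Lemma tens_r0 j a b (x : tn a) : tens j x (0 : tn b) = 0.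
Proof. by apply/ffunP => w; rewrite !ffunE coef0 mulr0. Qed.

Lemma tens_l0 j a b (y : tn b) : tens j (0 : tn a) y = 0.
Proof. by apply/ffunP => w; rewrite !ffunE coef0 mul0r. Qed.

End Aux.

Unset Implicit Arguments.

Lemma lN_mono N n : (0 < N)%N -> (lN N n <= lN N n.+1)%N.
Proof.
move=> hN; rewrite /lN /= uphalf_half; case: (odd n) => /=; lia.
Qed.

Theorem lemma4p2p2 (K : fieldType) (disp : Order.disp_t) (X : finOrderType disp)
    (N : nat) (R : seq (tn K X N)) (n : nat) :
  (2 <= N)%N ->
  lc_one R -> reduced R -> side_confluent R ->
  forall (m : nat), (lN N n <= m)%N ->
  forall (F1 F2 : tn K X m -> tn K X m) (k : nat),
    theta_inv (tensv m (IR R (m - lN N n)) (fullv : {vspace tn K X (lN N n)})) F1 ->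
    (if (m < lN N n.+1)%N then F2 = id
     else theta_inv (tensv m (fullv : {vspace tn K X (m - lN N n.+1)}) (J R n.+1)) F2) ->
    (forall x, alt k F1 F2 x = alt k F2 F1 x) ->
    forall x : tn K X m, in_imphi_J R n (left_bound k F1 F2 x).
Proof.
move=> hN hlc _ _ m hm F1 F2 k hF1 hF2 _ x.
case: ifP hF2 => [_ -> | hge hF2].
  by exists [::]; split => //; rewrite big_nil /left_bound subrr.
have hll : (lN N n <= lN N n.+1)%N by apply: lN_mono; lia.
have hl'm : (lN N n.+1 <= m)%N by rewrite leqNgt hge.
have hAB : (m - lN N n.+1 + lN N n.+1)%N = m by rewrite subnK.
set A := (m - lN N n.+1)%N in hAB hF2 *.
have hT1 := hF1.1; have hT2 := hF2.1.
have hl2 := redop_lin hT2.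
have hid2 : forall z, F2 (F2 z) = F2 z by case: hT2.
pose Q (s : seq X) := normal_word R (take A s).
pose y := \sum_(i < k | odd i) alt i F2 F1 x.
have Fq : forall z (u : m.-tuple X), F1 z u != 0 -> Q u.
  move=> z u /(redop_supp_gen hT1) hfix.
  have := fixed_normal hlc hF1 hm hfix.
  move/(normal_take (k:=A)); rewrite take_takel //; rewrite /A; lia.
have Yq : forall u : m.-tuple X, y u != 0 -> Q u.
  move=> u; rewrite /y sum_ffunE big_mkcond /= => /sum_ne0 [i].
  case: ifP => [hi|_]; last by rewrite eqxx.
  case: (i : nat) hi => [//|i'] hi; rewrite altS.
  have -> : odd i' = false by move: hi => /= /negbTE.
  by move=> /Fq.
have FYq : forall u : m.-tuple X, F2 y u != 0 -> Q u.
  move=> u; rewrite {1}(decomp y) lin2_sum // sum_ffunE => /sum_ne0 [w]; rewrite ffunE => H.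
  have Hy : y w != 0 by apply/eqP => E; move: H; rewrite E /GRing.scale /= mul0r eqxx.
  have Hw : F2 (ew K m w) u != 0 by apply/eqP => E; move: H; rewrite E /GRing.scale /= mulr0 eqxx.
  by rewrite /Q (prefix_pres hAB hF2 Hw); apply: Yq.
have LE : left_bound k F1 F2 x = y - F2 y by [].
rewrite LE; set L := y - F2 y.
have Lq : forall u : m.-tuple X, L u != 0 -> Q u.
  move=> u; rewrite /L !ffunE; case: (eqVneq (y u) 0) => [-> | /Yq //].
  by rewrite sub0r oppr_eq0 => /FYq.
have Lmem : L \in tensv m (fullv : {vspace tn K X A}) (J R n.+1).
  by apply/(hF2.2); rewrite /L lin2B // hid2 subrr.
exists [seq (if slice (lN N n.+1) L a == 0 then 0 else ew K A a, slice (lN N n.+1) L a) | a : A.-tuple X <- index_enum (A.-tuple X)].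
split.
  move=> p /mapP [a _ ->] /=; split; last exact: (slice_mem hAB (size_tuple a) Lmem).
  exists (if slice (lN N n.+1) L a == 0 then 0 else ew K A a); split; first exact: reach_refl.
  case: eqP => [_ t|/eqP Hs t]; first by rewrite ffunE eqxx.
  rewrite ffunE; case: (val t =P val a) => [-> _|]; last by rewrite /= mulr0n eqxx.
  have [c Hc] : exists c, slice (lN N n.+1) L a c != 0.
    apply/existsP; apply: contraR Hs => /existsPn H; apply/eqP/ffunP => c.
    by move: (H c); rewrite !ffunE negbK => /eqP.
  rewrite ffunE in Hc; have hs := coef_size Hc.
  have hs' : size (a ++ c) == m by rewrite hs.
  have := Lq (Tuple hs'); rewrite -coefT /= => /(_ Hc).
  by rewrite /Q take_size_cat ?size_tuple.
rewrite big_map {1}(@slice_decomp K disp X A (lN N n.+1) m L hAB); apply: eq_bigr => a _.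
by case: eqP => [->|_]; rewrite ?tens_r0.
Qed.
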